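(* Consider the randomized matching algorithm on the helper graph $\mathcal{H}_i$ described in the context, executed in the V-CONGEST model on $G$ where each real node $x$ simulates all copies $x_{\mathcal{C}}$ in $\mathcal{H}_i$ of its type-1 and type-2 virtual nodes on layer $l$. In each round of this matching algorithm, each real edge of $G$ is used to transmit at most twice in each direction; consequently each round of the matching algorithm can be carried out in $O(\Delta)$ time slots.
   Context: $G=(V,E)$ is a finite undirected graph with maximum degree $\Delta$. Fix an integer $L$. The virtual graph $\mathcal{G}$ contains $3L$ copies of each $v\in V$: each lower layer $1,\dots,L$ contains one copy of every node; each upper layer $L+1,\dots,2L$ contains a type-1 copy and a type-2 copy of every node. Every copy of $v$ is adjacent to all other copies of $v$ and to all copies of each neighbor of $v$ in $G$. $\Psi$ maps virtual nodes to real nodes. There are classes $1,\dots,t$. For a fixed upper layer $l$, nodes of layers $1,\dots,l-1$ are old nodes, each assigned a class; a component of class $i$ is a connected component of the subgraph induced by old nodes of class $i$. The helper graph $\mathcal{H}_i[\mathcal{C}]$: for each type-2 node $v$ of layer $l$, a node $v_{\mathcal{C}}$ is added iff $\Psi(v)\notin\Psi(\mathcal{C})$, $v$ has a neighbor in $\mathcal{C}$, and $v$ has no neighbor in another component of class $i$; for each such $v_{\mathcal{C}}$ and each type-1 neighbor $w$ of $v$ on layer $l$ that has a neighbor in some component $\mathcal{C}'\neq\mathcal{C}$ of class $i$ but no neighbor in $\mathcal{C}$, a node $w_{\mathcal{C}}$ and the edge $\{v_{\mathcal{C}},w_{\mathcal{C}}\}$ are added. $\mathcal{H}_i$ is the disjoint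 union of the $\mathcal{H}_i[\mathcal{C}]$; its nodes $v_{\mathcal{C}}$ coming from type-2 nodes are called type-2 and those coming from type-1 nodes type-1, and every edge joins a type-2 and a type-1 node. Matching algorithm: a node of $\mathcal{H}_i$ is active iff none of its incident edges is matched, an edge is active iff both endpoints are active. In each round, every active type-2 node assigns random numbers from a sufficiently large range to its incident active edges, selects the edge with the largest number and sends this choice to its neighbors; every type-1 node that received at least one proposal picks the proposed edge with the largest number and adds it to the matching (informing the proposer); matched nodes and their edges become inactive. V-CONGEST model: in each time slot each real node may send one identical message of $O(\log n)$ bits to all its neighbors in $G$. *)

(* Defs.v *)
From mathcomp Require Import all_boot.
Set Implicit Arguments.
Unset Strict Implicit.
Unset Printing Implicit Defensive.

Section HelperGraph.

Variables (V : finType) (adj : rel V) (L : nat).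

Definition degree (x : V) : nat := #|[set y | adj x y]|.
Definition maxdeg : nat := \max_(x : V) degree x.

(* Virtual nodes: (v, j) with j < 3L.
   j <  L        : copy of v on lower layer j+1
   L <= j < 2L   : type-1 copy of v on upper layer j+1
   2L <= j < 3L  : type-2 copy of v on upper layer j-L+1 *)
Definition vnode := (V * 'I_(3 * L))%type.
Definition Psi (a : vnode) : V := a.1.
Definition vlayer (a : vnode) : nat :=
  let j := val a.2 in if j < 2 * L then j.+1 else j - L + 1.
Definition is_type1 (a : vnode) : bool := (L <= val a.2) && (val a.2 < 2 * L).
Definition is_type2 (a : vnode) : bool := 2 * L <= val a.2.
Definition vadj (a b : vnode) : bool :=
  (a != b) && ((Psi a == Psi b) || adj (Psi a) (Psi b)).

(* classes 0..t-1 (the paper's 1..t), class assignment of the old nodes,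
   fixed upper layer l, fixed class i *)
Variables (t : nat) (cls : vnode -> 'I_t) (l : nat) (i : 'I_t).

Definition old (a : vnode) : bool := vlayer a < l.
Definition inS (a : vnode) : bool := old a && (cls a == i).
Definition crel : rel vnode := fun a b => [&& inS a, inS b & vadj a b].
Definition comp (a : vnode) : {set vnode} := [set b | connect crel a b].
Definition comps : {set {set vnode}} := [set comp a | a : vnode & inS a].

Definition nbr_in (a : vnode) (C : {set vnode}) : bool := [exists u in C, vadj a u].

(* nodes of H_i: pairs (v, C) standing for v_C *)
Definition hnode := (vnode * {set vnode})%type.
(* edges of H_i: (type-2 endpoint, type-1 endpoint) *)
Definition hedge := (hnode * hnode)%type.

Definition T2node (p : hnode) : bool :=
  let: (v, C) := p in
  [&& is_type2 v, vlayer v == l, C \in comps,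
      Psi v \notin [set Psi u | u in C], nbr_in v C &
      [forall C' in comps, (C' != C) ==> ~~ nbr_in v C']].

Definition Hedge (e : hedge) : bool :=
  let: ((v, C), (w, C2)) := e in
  [&& T2node (v, C), C2 == C, is_type1 w, vlayer w == l, vadj v w,
      [exists C' in comps, (C' != C) && nbr_in w C'] & ~~ nbr_in w C].

Definition incident (e : hedge) (x : hnode) : bool := (e.1 == x) || (e.2 == x).

Definition is_matching (M : {set hedge}) : Prop :=
  (forall e, e \in M -> Hedge e) /\
  (forall e1 e2, e1 \in M -> e2 \in M -> e1 != e2 ->
     (e1.1 != e2.1) && (e1.2 != e2.2)).

Variable (M : {set hedge}).
Definition active_node (x : hnode) : bool := [forall e in M, ~~ incident e x].
Definition active_edge (e : hedge) : bool :=
  [&& Hedge e, active_node e.1 & active_node e.2].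

(* r : the random numbers assigned to the edges in this round;
   prop x : the edge selected (proposed) by the type-2 node x, if any *)
Definition valid_prop (r : hedge -> nat) (prop : hnode -> option hedge) : Prop :=
  forall x, match prop x with
    | Some e => [/\ T2node x, active_node x, e.1 == x, active_edge e &
                   forall e', active_edge e' -> e'.1 == x -> r e' <= r e]
    | None => ~~ T2node x \/ ~~ active_node x \/
              (forall e', active_edge e' -> e'.1 != x)
    end.

Definition proposed (prop : hnode -> option hedge) (e : hedge) : bool :=
  prop e.1 == Some e.

(* acc y : the proposed edge picked (and added to the matching) by the
   type-1 node y, if it received at least one proposal *)
Definition valid_acc (r : hedge -> nat) (prop acc : hnode -> option hedge) : Prop :=
  forall y, match acc y with
    | Some e => [/\ e.2 == y, proposed prop e &
                   forall e', proposed prop e' -> e'.2 == y -> r e' <= r e]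
    | None => forall e', proposed prop e' -> e'.2 != y
    end.

(* message (false, x): the proposal (choice) of the type-2 node x, sent to all
   its neighbours in H_i;  message (true, y): the notification by the type-1
   node y to the proposer of the edge y added to the matching.  A message is
   transmitted over the real edge (a, b) iff it is sent by a copy simulated by
   a to a copy simulated by b. *)
Definition msg := (bool * hnode)%type.

Definition transmits (prop acc : hnode -> option hedge) (a b : V) (m : msg) : bool :=
  let: (k, x) := m in
  if k then (Psi x.1 == a) && [exists e, (acc x == Some e) && (Psi e.1.1 == b)]
  else [&& Psi x.1 == a, prop x != None &
          [exists e, [&& Hedge e, e.1 == x & Psi e.2.1 == b]]].

Definition sends (prop acc : hnode -> option hedge) (a : V) (m : msg) : bool :=
  [exists b, adj a b && transmits prop acc a b m].

Definition vcongest_schedule (prop acc : hnode -> option hedge) (k : nat)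
    (slot : msg -> nat) : Prop :=
  [/\ forall a m, sends prop acc a m -> slot m < k,
      forall a m1 m2, sends prop acc a m1 -> sends prop acc a m2 ->
        slot m1 = slot m2 -> m1 = m2 &
      forall a b x y, sends prop acc a (false, x) -> sends prop acc b (true, y) ->
        slot (false, x) < slot (true, y)].

End HelperGraph.

(* Main.v *)
Require Import Defs.
From mathcomp Require Import all_boot zify.
Set Implicit Arguments. Unset Strict Implicit.
Section S.
Variables (V : finType) (adj : rel V) (L t : nat) (cls : vnode V L -> 'I_t) (l : nat) (i : 'I_t).
Hypothesis hl : L < l <= 2 * L.

Lemma vn_eq (u1 u2 : vnode V L) : u1.1 = u2.1 -> val u1.2 = val u2.2 -> u1 = u2.
Proof. by case: u1 u2 => [x1 j1] [x2 j2] /= -> /val_inj ->. Qed.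

Lemma t2_uniq (u1 u2 : vnode V L) : Psi u1 = Psi u2 -> is_type2 u1 -> is_type2 u2 ->
  vlayer u1 = l -> vlayer u2 = l -> u1 = u2.
Proof.
rewrite /Psi /is_type2 /vlayer => e h1 h2 h3 h4; apply: vn_eq => //.
move: h1 h2 h3 h4; case: ifP; case: ifP; lia.
Qed.

Lemma t1_uniq (u1 u2 : vnode V L) : Psi u1 = Psi u2 -> is_type1 u1 -> is_type1 u2 ->
  vlayer u1 = l -> vlayer u2 = l -> u1 = u2.
Proof.
rewrite /Psi /is_type1 /vlayer => e h1 h2 h3 h4; apply: vn_eq => //.
move: h1 h2 h3 h4; case: ifP; case: ifP; lia.
Qed.

Lemma T2_info v C : T2node adj cls l i (v, C) ->
  [/\ is_type2 v, vlayer v = l & forall C2, T2node adj cls l i (v, C2) -> C2 = C].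
Proof.
case/and5P=> h2 /eqP hl' hC _ /andP[hn hf]; split=> // C2.
case/and5P=> _ _ hC2 _ /andP[hn2 _].
apply/eqP; apply: contraT => ne.
by move/forallP: hf => /(_ C2); rewrite hC2 ne hn2.
Qed.

Variables (M : {set hedge V L}) (r : hedge V L -> nat) (prop acc : hnode V L -> option (hedge V L)).
Hypotheses (vp : valid_prop adj cls l i M r prop) (va : valid_acc r prop acc).

Lemma prop_T2 x : prop x != None -> T2node adj cls l i x.
Proof. move=> h; move: (vp x); case: (prop x) h => // e _ [] //. Qed.

Lemma notif_info y e : acc y = Some e ->
  [/\ is_type1 y.1, vlayer y.1 = l, T2node adj cls l i e.1 & y.2 = e.1.2].
Proof.
move=> hy; move: (va y); rewrite hy => -[/eqP e2 hp _].
move: (vp e.1); rewrite (eqP hp) => -[_ _ _ /and3P[he _ _] _].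
move: he; clear hy; case: e e2 hp => [[v C] [w C2]] /= <- _.
by case/and5P => hT /eqP -> h1 /eqP hl1 _.
Qed.

Lemma notif_uniq y1 y2 e1 e2 : acc y1 = Some e1 -> acc y2 = Some e2 ->
  Psi y1.1 = Psi y2.1 -> Psi e1.1.1 = Psi e2.1.1 -> y1 = y2.
Proof.
move=> /notif_info[a1 b1 c1 d1] /notif_info[a2 b2 c2 d2] p q.
have ey : y1.1 = y2.1 by apply: t1_uniq.
move: c1 c2 d1 d2 q; case: e1 => [[v1 C1] w1]; case: e2 => [[v2 C2] w2] /= h1 h2 d1 d2 q.
 case: (T2_info h1) => t1 l1 u1; case: (T2_info h2) => t2 l2 u2.
have ev : v1 = v2 by apply: t2_uniq.
subst v2; have eC := u1 _ h2.
clear -ey d1 d2 eC; case: y1 y2 ey d1 d2 => [? ?] [? ?] /= -> -> ->; by rewrite eC.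
Qed.


Lemma prop_uniq x1 x2 : prop x1 != None -> prop x2 != None -> Psi x1.1 = Psi x2.1 -> x1 = x2.
Proof.
move=> /prop_T2 h1 /prop_T2 h2 p; move: h1 h2 p; case: x1 => v1 C1; case: x2 => v2 C2 h1 h2 /= p.
case: (T2_info h1) => t1 l1 u1; case: (T2_info h2) => t2 l2 u2.
have ev : v1 = v2 by apply: t2_uniq. subst v2. by rewrite (u1 _ h2).
Qed.

Lemma msg_inj a b (m1 m2 : msg V L) :
  transmits adj cls l i prop acc a b m1 -> transmits adj cls l i prop acc a b m2 ->
  m1.1 = m2.1 -> m1 = m2.
Proof.
case: m1 => k1 x1; case: m2 => k2 x2 /= + + ek; subst k2; case: k1.
- move=> /andP[/eqP p1 /existsP[e1 /andP[/eqP h1 /eqP q1]]].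
  move=> /andP[/eqP p2 /existsP[e2 /andP[/eqP h2 /eqP q2]]].
  by rewrite (notif_uniq h1 h2) // ?p1 ?p2 // q1 q2.
- move=> /and3P[/eqP p1 n1 _] /and3P[/eqP p2 n2 _].
  by rewrite (prop_uniq n1 n2) // p1 p2.
Qed.
End S.

Theorem lemma9 (V : finType) (adj : rel V) (L t : nat)
    (cls : vnode V L -> 'I_t) (l : nat) (i : 'I_t)
    (M : {set hedge V L}) (r : hedge V L -> nat)
    (prop acc : hnode V L -> option (hedge V L)) :
  symmetric adj -> irreflexive adj ->
  L < l <= 2 * L ->
  is_matching adj cls l i M ->
  valid_prop adj cls l i M r prop ->
  valid_acc r prop acc ->
  (forall a b : V, adj a b ->
     #|[set m | transmits adj cls l i prop acc a b m]| <= 2) /\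
  (exists slot : msg V L -> nat,
     vcongest_schedule adj cls l i prop acc (2 * maxdeg adj) slot).
Proof.
move=> _ _ hl _ vp va; split.
  move=> a b _; set S := [set m | _].
  have inj : {in S &, injective (fun m : msg V L => m.1)}.
    move=> m1 m2; rewrite !inE => h1 h2. exact: (msg_inj hl vp va h1 h2).
  rewrite -(card_in_imset inj).
  by apply: leq_trans (max_card _) _; rewrite card_bool.
pose slot (m : msg V L) := let: (k, x) := m in
  if k then match acc x with
    | Some e => (index (Psi e.1.1) (enum [set z | adj (Psi x.1) z])).+1
    | None => 0 end else 0.
have degle a : degree adj a <= maxdeg adj by rewrite /maxdeg; apply: (leq_bigmax a).
have degpos a b : adj a b -> 0 < degree adj a.
  by move=> h; rewrite /degree; apply/card_gt0P; exists b; rewrite inE.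
have sendsE a k x : sends adj cls l i prop acc a (k, x) -> Psi x.1 = a.
  by case/existsP=> b /andP[_]; case: k => /=; [case/andP=> /eqP | case/and3P=> /eqP].
have notifE a x : sends adj cls l i prop acc a (true, x) ->
   exists e b, [/\ acc x = Some e, Psi e.1.1 = b, adj a b &
      slot (true, x) = (index b (enum [set z | adj a z])).+1].
  move=> hs; have px := sendsE _ _ _ hs.
  case/existsP: hs => b /andP[hab /andP[_ /existsP[e /andP[/eqP he /eqP hb]]]].
  by exists e, b; rewrite /slot he hb px.
exists slot; split.
- move=> a [k x] hs; have hd : 0 < degree adj a.
    by case/existsP: hs => b /andP[h _]; exact: degpos h.
  have := degle a; case: k hs => hs; last by rewrite /=; lia.
  case: (notifE _ _ hs) => e [b [_ _ hab ->]].
  have : index b (enum [set z | adj a z]) < degree adj a.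
    by rewrite /degree cardE index_mem mem_enum inE.
  lia.
- move=> a [k1 x1] [k2 x2] h1 h2 es.
  have p1 := sendsE _ _ _ h1; have p2 := sendsE _ _ _ h2.
  case: k1 h1 es => h1 es; case: k2 h2 es => h2 es.
  + case: (notifE _ _ h1) => e1 [b1 [a1 q1 ab1 s1]].
    case: (notifE _ _ h2) => e2 [b2 [a2 q2 ab2 s2]].
    move: es; rewrite s1 s2 => -[es].
    have eb : b1 = b2.
      have m1 : b1 \in enum [set z | adj a z] by rewrite mem_enum inE.
      by rewrite -(nth_index b1 m1) es nth_index // mem_enum inE.
    by rewrite (notif_uniq hl vp va a1 a2) // ?p1 ?p2 // q1 q2.
  + by case: (notifE _ _ h1) => e1 [b1 [_ _ _ s1]]; move: es; rewrite s1.
  + by case: (notifE _ _ h2) => e1 [b1 [_ _ _ s1]]; move: es; rewrite s1.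
  + case/existsP: h1 => b1 /andP[_ /and3P[_ n1 _]].
    case/existsP: h2 => b2 /andP[_ /and3P[_ n2 _]].
    by rewrite (prop_uniq hl vp n1 n2) // p1 p2.
- move=> a b x y _ hs; case: (notifE _ _ hs) => e [b' [_ _ _ ->]]; by [].
Qed.
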